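(* Let $a\in[0,\infty)$ and let $t:[0,1]\to[0,\infty]$ and $s:[0,\infty]\to[0,1]$ be continuous and increasing functions such that $G_{t,s}(x,y)=s(t(x)+t(y))$ defines a grouping function $G_{t,s}:[0,1]^2\to[0,1]$ having $0$ as neutral element (i.e. $G_{t,s}(x,0)=x$ for all $x\in[0,1]$). If $t(x)=\frac{a}{2}$ holds if and only if $x=0$, then $G_{t,s}$ is associative.
   Context: ''Increasing'' means non-decreasing. Arithmetic in $[0,\infty]$ uses $c+\infty=\infty$; continuity on $[0,\infty]$ refers to the usual topology of the extended half-line. A grouping function is a map $G:[0,1]^2\to[0,1]$ that is (G1) commutative, (G2) $G(x,y)=0$ iff $x=y=0$, (G3) $G(x,y)=1$ iff $x=1$ or $y=1$, (G4) increasing in each variable, (G5) continuous. *)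

(* Defs.v *)
From HB Require Import structures.
From mathcomp Require Import all_boot all_order all_algebra.
From mathcomp Require Import all_classical all_reals all_analysis.
Set Implicit Arguments. Unset Strict Implicit. Unset Printing Implicit Defensive.
Import Order.TTheory GRing.Theory Num.Theory.
Import numFieldNormedType.Exports.
Local Open Scope classical_set_scope.
Local Open Scope ring_scope.

Definition unit_itv (R : realType) : set R := [set x : R | 0 <= x <= 1].

Definition unit_sq (R : realType) : set (R * R) :=
  [set p : R * R | (0 <= p.1 <= 1) /\ (0 <= p.2 <= 1)].

(* Grouping function G : [0,1]^2 -> [0,1], given as a function R -> R -> R
   whose behaviour is only constrained on [0,1]^2. *)
Definition grouping_function (R : realType) (G : R -> R -> R) : Prop :=
  (forall x y, unit_itv x -> unit_itv y -> 0 <= G x y <= 1) /\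
  (forall x y, unit_itv x -> unit_itv y -> G x y = G y x) /\
  (forall x y, unit_itv x -> unit_itv y -> (G x y = 0 <-> (x = 0 /\ y = 0))) /\
  (forall x y, unit_itv x -> unit_itv y -> (G x y = 1 <-> (x = 1 \/ y = 1))) /\
  (forall x x' y, unit_itv x -> unit_itv x' -> unit_itv y ->
     x <= x' -> G x y <= G x' y) /\
  (forall x y y', unit_itv x -> unit_itv y -> unit_itv y' ->
     y <= y' -> G x y <= G x y') /\
  {within @unit_sq R, continuous (fun p : R * R => G p.1 p.2)}.

(* Main.v *)
Require Import Defs.
From HB Require Import structures.
From mathcomp Require Import all_boot all_order all_algebra.
From mathcomp Require Import all_classical all_reals all_analysis.
From mathcomp Require Import lra.
Import Order.TTheory GRing.Theory Num.Theory.
Import numFieldNormedType.Exports.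
Local Open Scope classical_set_scope.
Local Open Scope ring_scope.

Lemma cont_open (R : realType) (t : R -> \bar R) c (U : set (\bar R)) :
  {within @unit_itv R, continuous t} -> unit_itv c -> open U -> U (t c) ->
  exists2 d : R, 0 < d & forall c', unit_itv c' -> `|c - c'| < d -> U (t c').
Proof.
move=> /subspace_continuousP /(_ c) H Hc oU Utc.
have := H Hc U (open_nbhs_nbhs (conj oU Utc)).
rewrite /= nbhs_simpl /= => /nbhs_ballP [e e0 He].
exists e => // c' Hc' Hd; apply: He => //.
Qed.

Lemma ltE1 (R : realType) (u : \bar R) (b r : R) :
  (u + b%:E < r%:E)%E -> (u < (r - b)%:E)%E.
Proof. by case: u => [q||] //=; rewrite ?lte_fin ?ltNyr // => h; lra. Qed.

Lemma ltE2 (R : realType) (u : \bar R) (b r : R) :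
  (u < (r - b)%:E)%E -> (u + b%:E < r%:E)%E.
Proof. by case: u => [q||] //=; rewrite ?lte_fin ?ltNyr // => h; lra. Qed.

Lemma gtE1 (R : realType) (u : \bar R) (b r : R) :
  (r%:E < u + b%:E)%E -> ((r - b)%:E < u)%E.
Proof. by case: u => [q||] //=; rewrite ?lte_fin ?ltry // => h; lra. Qed.

Lemma gtE2 (R : realType) (u : \bar R) (b r : R) :
  ((r - b)%:E < u)%E -> (r%:E < u + b%:E)%E.
Proof. by case: u => [q||] //=; rewrite ?lte_fin ?ltry // => h; lra. Qed.

Theorem proposition6p5 (R : realType) (a : R) (t : R -> \bar R) (s : \bar R -> R) :
  0 <= a ->
  (* t : [0,1] -> [0,+oo], continuous and increasing *)
  (forall x, unit_itv x -> (0 <= t x)%E) ->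
  {within @unit_itv R, continuous t} ->
  (forall x y, unit_itv x -> unit_itv y -> x <= y -> (t x <= t y)%E) ->
  (* s : [0,+oo] -> [0,1], continuous and increasing *)
  (forall u : \bar R, (0 <= u)%E -> 0 <= s u <= 1) ->
  {within [set u : \bar R | (0 <= u)%E], continuous s} ->
  (forall u v : \bar R, (0 <= u)%E -> (u <= v)%E -> s u <= s v) ->
  (* G_{t,s}(x,y) = s(t(x)+t(y)) is a grouping function with neutral element 0 *)
  grouping_function (fun x y => s (t x + t y)%E) ->
  (forall x, unit_itv x -> s (t x + t 0%R)%E = x) ->
  (* t(x) = a/2 iff x = 0 *)
  (forall x, unit_itv x -> (t x = (a / 2)%:E <-> x = 0)) ->
  (* conclusion: G_{t,s} is associative *)
  forall x y z, unit_itv x -> unit_itv y -> unit_itv z ->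
    s (t (s (t x + t y)%E) + t z)%E = s (t x + t (s (t y + t z)%E))%E.
Proof.
move=> a0 tge0 tc tmono sr sc smono HG Hneu Hta.
have I0 : unit_itv (0:R) by rewrite /unit_itv /= lexx ler01.
have I1 : unit_itv (1:R) by rewrite /unit_itv /= lexx ler01.
have t0 : t 0 = (a/2)%:E by apply/(Hta 0 I0).
have F1 : forall c, unit_itv c -> s (t c + (a/2)%:E)%E = c.
  by move=> c Hc; rewrite -t0 Hneu.
have a2 : 0 <= a/2 by rewrite divr_ge0.
have tge : forall c, unit_itv c -> ((a/2)%:E <= t c)%E.
  move=> c Hc; rewrite -t0; apply: tmono => //; by case/andP: Hc.
have tcpos : forall c, unit_itv c -> (0 <= t c + (a/2)%:E)%E.
  by move=> c Hc; apply: adde_ge0; [apply: tge0 | rewrite lee_fin].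
have s1 : forall u, (t 1%R + (a/2)%:E <= u)%E -> s u = 1%R.
  move=> u hu; have h0 := tcpos 1 I1.
  apply/eqP; rewrite eq_le; have := sr u (le_trans h0 hu) => /andP[_ ->] /=.
  by rewrite -{1}(F1 1 I1); apply: smono.
have inv : forall v, (a%:E <= v)%E -> (v <= t 1%R + (a/2)%:E)%E ->
    (t (s v) + (a/2)%:E = v)%E.
  move=> v av vle.
  have v0 : (0 <= v)%E by apply: le_trans av; rewrite lee_fin.
  have Ic : unit_itv (s v) by exact: sr.
  case/andP: (Ic) => c0 c1.
  have [lt|ge] := ltP (t (s v) + (a/2)%:E)%E v.
  - exfalso.
    have cne1 : s v != 1.
      apply/eqP => e; move: lt; rewrite e => lt.
      by have := lt_le_trans lt vle; rewrite ltxx.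
    have clt1 : s v < 1 by rewrite lt_neqAle cne1.
    have vny : v != +oo%E.
      apply/eqP => e.
      have := smono _ _ (tcpos 1 I1) (leey (t 1%R + (a/2)%:E)%E).
      rewrite F1 // -e; lra.
    have [r er] : exists r, v = r%:E.
      move: av vny; case: (v) => [r _ _|//|//]; first by exists r.
    have {}lt : (t (s v) + (a/2)%:E < r%:E)%E by rewrite -er.
    have := @cont_open R t (s v) [set u | (u < (r - a/2)%:E)%E] tc Ic
      (@open_ereal_lt_ereal R _) (@ltE1 R _ _ _ lt).
    case=> d d0 Hd.
    suff [c' [Ic' [cc' dc']]] : exists c', unit_itv c' /\ s v < c' /\ `|s v - c'| < d.
      have := @ltE2 R _ _ _ (Hd c' Ic' dc'); rewrite -er => h.
      have := smono _ _ (tcpos c' Ic') (ltW h); rewrite F1 //; lra.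
    have [h|h] := leP (s v + d/2) 1.
      exists (s v + d/2); split; first by rewrite /unit_itv /=; apply/andP; split; lra.
      split; first lra.
      rewrite ltr_norml; apply/andP; split; lra.
    exists 1; split => //; split => //.
    rewrite ltr_norml; apply/andP; split; lra.
  - move: ge; rewrite le_eqVlt => /orP [/eqP e|gt]; first by rewrite -e.
    exfalso.
    have cne0 : s v != 0.
      apply/eqP => e; move: gt; rewrite e t0 -EFinD.
      have -> : a/2 + a/2 = a by lra.
      by rewrite ltNge av.
    have clt0 : 0 < s v by rewrite lt_neqAle eq_sym cne0.
    have vny : v != +oo%E.
      by apply/eqP => e; move: gt; rewrite e ltNge leey.
    have [r er] : exists r, v = r%:E.
      move: av vny; case: (v) => [r _ _|//|//]; first by exists r.
    have {}gt : (r%:E < t (s v) + (a/2)%:E)%E by rewrite -er.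
    have := @cont_open R t (s v) [set u | ((r - a/2)%:E < u)%E] tc Ic
      (@open_ereal_gt_ereal R _) (@gtE1 R _ _ _ gt).
    case=> d d0 Hd.
    suff [c' [Ic' [cc' dc']]] : exists c', unit_itv c' /\ c' < s v /\ `|s v - c'| < d.
      have := @gtE2 R _ _ _ (Hd c' Ic' dc'); rewrite -er => h.
      have := smono _ _ v0 (ltW h); rewrite F1 //; lra.
    have [h|h] := leP 0 (s v - d/2).
      exists (s v - d/2); split; first by rewrite /unit_itv /=; apply/andP; split; lra.
      split; first lra.
      rewrite ltr_norml; apply/andP; split; lra.
    exists 0; split => //; split => //.
    rewrite ltr_norml; apply/andP; split; lra.
have K : forall X Y Z, ((a/2)%:E <= X)%E -> ((a/2)%:E <= Y)%E -> ((a/2)%:E <= Z)%E ->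
   s (t (s (X + Y)) + Z)%E = s (X + Y + Z - (a/2)%:E)%E.
  move=> X Y Z hX hY hZ.
  have hu : (a%:E <= X + Y)%E.
    have := leeD hX hY; rewrite -EFinD.
    by have -> : a/2 + a/2 = a by lra.
  have [le|gt] := leP (X + Y)%E (t 1%R + (a/2)%:E)%E.
    have e := inv _ hu le.
    have -> : (X + Y + Z - (a/2)%:E = t (s (X+Y)) + Z)%E.
      by rewrite -{1}e addeAC addeK.
    by [].
  rewrite (s1 (X + Y)%E (ltW gt)) (s1 (t 1%R + Z)%E); last by apply: leeD2l.
  rewrite s1 //.
  rewrite -addeA; apply: lee_paddr; last exact: ltW.
  by rewrite suber_ge0.
move=> x y z Ix Iy Iz.
rewrite (K _ _ _ (tge _ Ix) (tge _ Iy) (tge _ Iz)).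
rewrite [in RHS]addeC (K _ _ _ (tge _ Iy) (tge _ Iz) (tge _ Ix)).
by rewrite (addeC (t y + t z)) addeA.
Qed.
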